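(* Let $s>0$, $Y>3s$, and for $\tau\geq0$ put $x_+(\tau)=\frac sYe^{s\tau}$, $\tau^*=\frac1s\ln\left(\frac Y{3s}\right)$, and consider the characteristic equation \[ \lambda^2+p(\tau)\lambda+(q\lambda+c(\tau))e^{-\lambda\tau}+\alpha(\tau)=0, \tag{C} \] with $p(\tau)=s\left(1+\frac{e^{s\tau}}{Y}\right)$, $q=-s$, $c(\tau)=s\left(1-\frac{2se^{s\tau}}{Y}\right)$, $\alpha(\tau)=\frac{s^2e^{s\tau}}{Y}$. Define for $\tau\in[0,\tau^*]$ \[ \omega_+(\tau)=\sqrt{\tfrac12\left(-x_+(\tau)^2+\sqrt{x_+(\tau)^4+s^2\left(12x_+(\tau)^2-16x_+(\tau)+4\right)}\right)}, \] \[ h_2(\omega,\tau)=\frac{\omega^2(1+s-x_+(\tau))-(1-2x_+(\tau))s\,x_+(\tau)}{s\left((1-2x_+(\tau))^2+\omega^2\right)}, \qquad \theta(\tau)=\arccos\big(h_2(\omega_+(\tau),\tau)\big)\in[0,\pi]. \] For each integer $n\geq0$, let $\tau_n^1<\tau_n^2<\dots<\tau_n^{j_n}$ denote the points $\tau\in(0,\tau^* )$ at which $\tau\omega_+(\tau)=\theta(\tau)+2n\pi$. Then (C) has a pair of purely imaginary roots if and only if $\tau=\tau_n^j\in(0,\tau^* )$ for some integer $n\geq0$ and some $j$. At every such $\tau_n^j$, the pair of purely imaginary roots $\pm i\omega_+(\tau_n^j)$ is simple and no other root of (C) is an integer multiple of $i\omega_+(\tau_n^j)$. If, in addition, $\frac{d}{d\tau}(\tau\omega_+(\tau))\big|_{\tau=\tau_n^j}\neq\frac{d}{d\tau}\theta(\tau)\big|_{\tau=\tau_n^j}$,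 then the transversality condition $\frac{d}{d\tau}\operatorname{Re}\lambda(\tau)\big|_{\tau=\tau_n^j}\neq0$ holds for the root branch $\lambda(\tau)$ with $\lambda(\tau_n^j)=i\omega_+(\tau_n^j)$.
   Context: (C) is the characteristic equation of the linearization of the delay system $\dot x=x(1-x)-yx$, $\dot y=-sy+Ye^{-s\tau}y(t-\tau)x(t-\tau)$ at its coexistence equilibrium $E_+=(x_+(\tau),1-x_+(\tau))$, which has positive components for $\tau\in[0,\tau^*]$ when $Y>3s$. The function $\theta$ is well defined and continuously differentiable on $[0,\tau^*]$. *)

(* Defs.v *)
From Stdlib Require Export Reals.
From Coquelicot Require Export Coquelicot.
Open Scope R_scope.

Definition Cexp (z : C) : C :=
  (exp (Re z) * cos (Im z), exp (Re z) * sin (Im z)).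

Definition x_plus (s Y tau : R) : R := s / Y * exp (s * tau).

Definition tau_star (s Y : R) : R := / s * ln (Y / (3 * s)).

Definition p_coef (s Y tau : R) : R := s * (1 + exp (s * tau) / Y).
Definition q_coef (s : R) : R := - s.
Definition c_coef (s Y tau : R) : R := s * (1 - 2 * s * exp (s * tau) / Y).
Definition alpha_coef (s Y tau : R) : R := s ^ 2 * exp (s * tau) / Y.

Definition charfun (s Y tau : R) (lam : C) : C :=
  (lam * lam + RtoC (p_coef s Y tau) * lam
   + (RtoC (q_coef s) * lam + RtoC (c_coef s Y tau)) * Cexp (- lam * RtoC tau)
   + RtoC (alpha_coef s Y tau))%C.

Definition omega_plus (s Y tau : R) : R :=
  let x := x_plus s Y tau in
  sqrt (/ 2 * (- x ^ 2 + sqrt (x ^ 4 + s ^ 2 * (12 * x ^ 2 - 16 * x + 4)))).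

Definition h2 (s Y omega tau : R) : R :=
  let x := x_plus s Y tau in
  (omega ^ 2 * (1 + s - x) - (1 - 2 * x) * s * x)
  / (s * ((1 - 2 * x) ^ 2 + omega ^ 2)).

Definition theta (s Y tau : R) : R := acos (h2 s Y (omega_plus s Y tau) tau).

(* tau is one of the points tau_n^1 < ... < tau_n^{j_n} : a point of (0, tau^* )
   at which tau * omega_+(tau) = theta(tau) + 2 n pi *)
Definition is_tau_n (s Y : R) (n : nat) (tau : R) : Prop :=
  0 < tau < tau_star s Y /\
  tau * omega_plus s Y tau = theta s Y tau + 2 * INR n * PI.

(* Main.v *)
Require Import Defs.
From Stdlib Require Import Reals ZArith Lra Psatz.
From Coquelicot Require Import Coquelicot.
Open Scope R_scope.

Lemma exp_bound a : Rabs a <= /2 -> Rabs (exp a - 1 - a) <= 2 * a^2.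
Proof.
  intros Ha. apply Rabs_le_between in Ha.
  assert (H1 := exp_ineq1_le a). assert (H2 := exp_ineq1_le (-a)).
  assert (Hp := exp_pos a).
  rewrite exp_Ropp in H2.
  assert (H3 : exp a * (1 - a) <= 1).
  { apply Rmult_le_compat_l with (r := exp a) in H2; [|lra].
    rewrite Rinv_r in H2 by lra. nra. }
  apply Rabs_le. split; nra.
Qed.

Lemma cos_lb_eq b : cos_lb b = 1 - b^2/2 + b^4/24 - b^6/720.
Proof. unfold cos_lb, cos_approx, cos_term. cbv [sum_f_R0].
 rewrite !INR_IZR_INZ. cbn -[IZR pow Rdiv Rmult Rplus]. simpl IZR. field. Qed.

Lemma sin_lb_eq b : sin_lb b = b - b^3/6 + b^5/120 - b^7/5040.
Proof. unfold sin_lb, sin_approx, sin_term. cbv [sum_f_R0].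
 rewrite !INR_IZR_INZ. cbn -[IZR pow Rdiv Rmult Rplus]. simpl IZR. field. Qed.

Lemma cos_bound1 b : Rabs b <= /2 -> Rabs (cos b - 1) <= b^2 / 2.
Proof.
  intros Hb. apply Rabs_le_between in Hb.
  assert (HP : PI/2 > 1) by (pose proof PI2_1; lra).
  assert (H := COS b ltac:(lra) ltac:(lra)).
  rewrite cos_lb_eq in H.
  assert (H2 := COS_bound b).
  apply Rabs_le. split; [|nra].
  destruct H as [H _]. nra.
Qed.

Lemma sin_bound0 b : 0 <= b <= /2 -> 0 <= b - sin b <= b^2 /2.
Proof.
  intros Hb.
  assert (HP : PI > 1) by (pose proof PI2_1; lra).
  assert (H := SIN b ltac:(lra) ltac:(lra)).
  rewrite sin_lb_eq in H.
  destruct H as [H _].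
  destruct (Req_dec b 0) as [->|]. { rewrite sin_0. lra. }
  assert (sin b < b) by (apply sin_lt_x; lra).
  assert (h2 : 0 <= b^2) by nra.
  assert (h3 : b^3 <= b^2/2) by (replace (b^3) with (b*b^2) by ring; nra).
  assert (h5 : 0 <= b^5) by (replace (b^5) with (b*(b^2)^2) by ring; apply Rmult_le_pos; nra).
  assert (h7 : b^7 <= b^3) by (replace (b^7) with (b^3*(b^2)^2) by ring; assert (b^2 <= 1/4) by nra; assert ((b^2)^2 <= 1) by nra; assert (0<=b^3) by nra; nra).
  split; lra.
Qed.

Lemma sin_bound1 b : Rabs b <= /2 -> Rabs (sin b - b) <= b^2 / 2.
Proof.
  intros Hb. destruct (Rle_dec 0 b).
  - assert (H := sin_bound0 b). apply Rabs_le_between in Hb.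
    apply Rabs_le. split; nra.
  - assert (H := sin_bound0 (-b)). apply Rabs_le_between in Hb.
    rewrite sin_neg in H. apply Rabs_le. split; nra.
Qed.

Lemma Cexp_add z w : Cexp (z + w)%C = (Cexp z * Cexp w)%C.
Proof.
  destruct z as [a b], w as [c d]. unfold Cexp; simpl.
  rewrite exp_plus, cos_plus, sin_plus.
  apply injective_projections; simpl; ring.
Qed.

Lemma Rabs_sin_le b : Rabs b <= /2 -> Rabs (sin b) <= 2 * Rabs b.
Proof.
  intros H. assert (H1 := sin_bound1 b H).
  replace (sin b) with ((sin b - b) + b) by ring.
  eapply Rle_trans; [apply Rabs_triang|].
  assert (b^2 = Rabs b * Rabs b) by (rewrite <- Rabs_mult; rewrite Rabs_pos_eq; [ring| nra]).
  assert (0 <= Rabs b) by apply Rabs_pos. nra.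
Qed.

Lemma Cexp_small h : Cmod h <= /2 -> Cmod (Cexp h - 1 - h)%C <= 10 * Cmod h ^ 2.
Proof.
  destruct h as [a b]. intros Hh.
  assert (Hm := Rmax_Cmod (a,b)). simpl fst in Hm. simpl snd in Hm.
  set (m := Cmod (a,b)) in *.
  assert (Ha : Rabs a <= m) by (eapply Rle_trans; [apply Rmax_l|exact Hm]).
  assert (Hb : Rabs b <= m) by (eapply Rle_trans; [apply Rmax_r|exact Hm]).
  assert (Ha0 := Rabs_pos a). assert (Hb0 := Rabs_pos b).
  assert (Ea := exp_bound a ltac:(lra)).
  assert (Cb := cos_bound1 b ltac:(lra)).
  assert (Sb := sin_bound1 b ltac:(lra)).
  assert (Sb2 := Rabs_sin_le b ltac:(lra)).
  assert (a2 : a^2 = Rabs a * Rabs a) by (rewrite <- Rabs_mult; rewrite Rabs_pos_eq; [ring| nra]).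
  assert (b2 : b^2 = Rabs b * Rabs b) by (rewrite <- Rabs_mult; rewrite Rabs_pos_eq; [ring| nra]).
  assert (Hcos := COS_bound b).
  assert (Hre : Rabs (exp a * cos b - 1 - a) <= 5 * m^2).
  { replace (exp a * cos b - 1 - a) with ((exp a - 1 - a) * cos b + (1 + a) * (cos b - 1)) by ring.
    eapply Rle_trans; [apply Rabs_triang|]. rewrite !Rabs_mult.
    assert (Rabs (cos b) <= 1) by (apply Rabs_le; lra).
    assert (Rabs (1 + a) <= 3/2) by (apply Rabs_le; apply Rabs_le_between in Ha; lra).
    assert (Rabs (exp a - 1 - a) * Rabs (cos b) <= 2 * a^2).
    { apply Rle_trans with (Rabs (exp a - 1 - a) * 1). apply Rmult_le_compat_l; [apply Rabs_pos|lra]. lra. }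
    assert (Rabs (1 + a) * Rabs (cos b - 1) <= 3/2 * (b^2/2)).
    { apply Rmult_le_compat; try apply Rabs_pos; lra. }
    nra. }
  assert (Him : Rabs (exp a * sin b - b) <= 5 * m^2).
  { replace (exp a * sin b - b) with ((exp a - 1 - a) * sin b + a * sin b + (sin b - b)) by ring.
    eapply Rle_trans; [apply Rabs_triang|].
    eapply Rle_trans; [apply Rplus_le_compat_r; apply Rabs_triang|]. rewrite !Rabs_mult.
    assert (Rabs (sin b) <= 1) by (apply Rabs_le; assert (H := SIN_bound b); lra).
    assert (Rabs (exp a - 1 - a) * Rabs (sin b) <= 2 * a^2).
    { apply Rle_trans with (Rabs (exp a - 1 - a) * 1). apply Rmult_le_compat_l; [apply Rabs_pos|lra]. lra. }
    assert (Rabs a * Rabs (sin b) <= Rabs a * (2 * Rabs b)).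
    { apply Rmult_le_compat_l; [apply Rabs_pos|lra]. }
    assert (m * m <= /4) by (assert (0 <= m) by lra; nra).
    nra. }
  assert (Hs2 : sqrt 2 <= 2).
  { rewrite <- (sqrt_pow2 2) at 2 by lra. apply sqrt_le_1_alt. lra. }
  eapply Rle_trans; [apply Cmod_2Rmax|]. simpl fst; simpl snd.
  unfold Cexp. simpl.
  replace (exp a * cos b - 1 - a) with (exp a * cos b + - (1) + - a) in Hre by ring.
  replace (exp a * sin b - b) with (exp a * sin b + - 0 + - b) in Him by ring.
  assert (Rmax (Rabs (exp a * cos b + - (1) + - a)) (Rabs (exp a * sin b + - 0 + - b)) <= 5 * m^2).
  { apply Rmax_lub; lra. }
  assert (0 <= Rmax (Rabs (exp a * cos b + - (1) + - a)) (Rabs (exp a * sin b + - 0 + - b))).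
  { eapply Rle_trans; [apply Rabs_pos| apply Rmax_l]. }
  assert (0 <= sqrt 2) by apply sqrt_pos.
  nra.
Qed.

Lemma is_derive_Cexp z : is_derive Cexp z (Cexp z).
Proof.
  split. { apply is_linear_scal_l. }
  intros x Hx. apply (@is_filter_lim_locally_unique C_AbsRing (AbsRing_NormedModule C_AbsRing)) in Hx. subst x.
  intros eps.
  set (d := Rmin (/2) (eps / (10 * (Cmod (Cexp z) + 1)))).
  assert (HC := Cmod_ge_0 (Cexp z)).
  assert (Hd : 0 < d).
  { unfold d. apply Rmin_pos. lra. apply Rdiv_lt_0_compat. destruct eps; simpl; lra. lra. }
  exists (mkposreal d Hd).
  intros y Hy. simpl in Hy. unfold ball in Hy. simpl in Hy. unfold AbsRing_ball in Hy.
  change (norm ?u) with (Cmod u).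
  change (abs ?u) with (Cmod u) in Hy.
  change (minus ?a ?b) with (Cminus a b) in *. change (scal ?a ?b) with (Cmult a b).
  set (h := (y - z)%C) in *.
  replace y with (z + h)%C by (unfold h; ring).
  rewrite Cexp_add.
  match goal with |- Cmod ?e <= _ => replace e with (Cexp z * (Cexp h - 1 - h))%C end.
  2:{ unfold minus, plus, opp. simpl. ring. }
  rewrite Cmod_mult.
  assert (Hh : Cmod h <= /2) by (assert (d <= /2) by apply Rmin_l; lra).
  assert (Hh2 := Cexp_small h Hh).
  assert (Hd2 : d <= eps / (10 * (Cmod (Cexp z) + 1))) by apply Rmin_r.
  assert (H0 := Cmod_ge_0 h).
  assert (Cmod h ^ 2 <= Cmod h * d) by nra.
  assert (10 * (Cmod (Cexp z) + 1) * d <= eps).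
  { apply Rle_trans with (10 * (Cmod (Cexp z) + 1) * (eps / (10 * (Cmod (Cexp z) + 1)))).
    apply Rmult_le_compat_l; lra. right; field; lra. }
  assert (Cmod (Cexp z) * Cmod (Cexp h - 1 - h)%C <= Cmod (Cexp z) * (10 * (Cmod h * d))).
  { apply Rmult_le_compat_l; lra. }
  assert (0 <= eps) by (destruct eps; simpl; lra).
  nra.
Qed.

Lemma conv (f : C -> C) z a : @is_derive C_AbsRing C_NormedModule f z a -> @is_derive C_AbsRing (AbsRing_NormedModule C_AbsRing) f z a.
Proof. intros [Hl Hd]. split.
 - apply is_linear_scal_l.
 - intros x Hx eps. specialize (Hd x Hx eps).
   eapply filter_imp; [|exact Hd]. intros y Hy. simpl in *.
   change (norm (minus (minus (f y) (f x)) (scal (minus y x) a))) with (Cmod (minus (minus (f y) (f x)) (scal (minus y x) a))) in Hy.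
   exact Hy.
Qed.

Lemma conv2 (f : C -> C) z a : @is_derive C_AbsRing (AbsRing_NormedModule C_AbsRing) f z a -> @is_derive C_AbsRing C_NormedModule f z a.
Proof. intros [Hl Hd]. split.
 - apply is_linear_scal_l.
 - intros x Hx eps. specialize (Hd x Hx eps).
   eapply filter_imp; [|exact Hd]. intros y Hy. simpl in *.
   change (norm (minus (minus (f y) (f x)) (scal (minus y x) a))) with (Cmod (minus (minus (f y) (f x)) (scal (minus y x) a))).
   exact Hy.
Qed.

Lemma dC_plus (f g : C -> C) z a b : is_derive f z a -> is_derive g z b ->
  is_derive (fun u => f u + g u)%C z (a + b)%C.
Proof. intros. exact (is_derive_plus f g z a b H H0). Qed.

Lemma dC_mult (f g : C -> C) z a b : is_derive f z a -> is_derive g z b ->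
  is_derive (fun u => f u * g u)%C z (a * g z + f z * b)%C.
Proof. intros. apply conv2. exact (is_derive_mult f g z a b (conv _ _ _ H) (conv _ _ _ H0) Cmult_comm). Qed.

Lemma dC_const (c z : C) : is_derive (fun _ : C => c) z (RtoC 0).
Proof. assert (e : RtoC 0 = (zero : C_NormedModule)) by (apply injective_projections; reflexivity).
  rewrite e. exact (is_derive_const c z). Qed.

Lemma dC_id (z : C) : is_derive (fun u : C => u) z (RtoC 1).
Proof. assert (e : RtoC 1 = (one : C_AbsRing)) by (apply injective_projections; reflexivity).
  rewrite e. apply conv2. exact (is_derive_id z). Qed.

Lemma dC_comp (f g : C -> C) z a b : is_derive f (g z) a -> is_derive g z b ->
  is_derive (fun u => f (g u)) z (b * a)%C.
Proof. intros. exact (is_derive_comp f g z a b H (conv _ _ _ H0)). Qed.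

Lemma dC_opp (f : C -> C) z a : is_derive f z a ->
  is_derive (fun u => - f u)%C z (- a)%C.
Proof. intros. exact (is_derive_opp f z a H). Qed.

Lemma deriv_eq (f : C -> C) z (a b : C) : is_derive f z a -> a = b -> is_derive f z b.
Proof. intros H e. rewrite <- e. exact H. Qed.

Definition dchar s Y t (l : C) : C :=
  let E := Cexp (- l * RtoC t)%C in
  (l + l + RtoC (p_coef s Y t) + RtoC (q_coef s) * E
   + (RtoC (q_coef s) * l + RtoC (c_coef s Y t)) * (- RtoC t * E))%C.

Lemma is_derive_charfun s Y t l : is_derive (charfun s Y t) l (dchar s Y t l).
Proof.
  unfold charfun, dchar.
  eapply is_derive_ext.
  { intros u. reflexivity. }
  match goal with |- is_derive _ _ ?d => set (D := d) end.
  assert (H := dC_plus _ _ l _ _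
    (dC_plus _ _ l _ _
      (dC_plus _ _ l _ _ (dC_mult _ _ l _ _ (dC_id l) (dC_id l))
                         (dC_mult _ _ l _ _ (dC_const (RtoC (p_coef s Y t)) l) (dC_id l)))
      (dC_mult _ _ l _ _
        (dC_plus _ _ l _ _ (dC_mult _ _ l _ _ (dC_const (RtoC (q_coef s)) l) (dC_id l)) (dC_const (RtoC (c_coef s Y t)) l))
        (dC_comp Cexp (fun u => (- u * RtoC t)%C) l _ _ (is_derive_Cexp _)
           (dC_mult _ _ l _ _ (dC_opp (fun u => u) l _ (dC_id l)) (dC_const (RtoC t) l)))))
    (dC_const (RtoC (alpha_coef s Y t)) l)).
  refine (deriv_eq _ _ _ _ H _). cbv beta. unfold D. ring.
Qed.

Definition F1 (s Y a b t : R) : R :=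
  let x := x_plus s Y t in
  a*a - b*b + (s + x)*a + s*x + exp (-(a*t)) * ((-s*a + s*(1-2*x))*cos (b*t) + (-s)*b*sin (b*t)).
Definition F2 (s Y a b t : R) : R :=
  let x := x_plus s Y t in
  2*a*b + (s + x)*b + exp (-(a*t)) * ((-s)*b*cos (b*t) - (-s*a + s*(1-2*x))*sin (b*t)).

Lemma charfun_comp s Y a b t : 0 < Y ->
  charfun s Y t (a,b) = (F1 s Y a b t, F2 s Y a b t).
Proof.
  intros HY.
  unfold charfun, Cexp, F1, F2, p_coef, q_coef, c_coef, alpha_coef, x_plus. simpl.
  replace (- a * t - - b * 0) with (-(a*t)) by ring.
  replace (- a * 0 + - b * t) with (-(b*t)) by ring.
  rewrite cos_neg, sin_neg.
  apply injective_projections; simpl; field; lra.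
Qed.

Definition kk (x : R) := (1-x)*(1-3*x).
Definition Mrel s x w := w^4 + x^2*w^2 - s^2 * kk x.
Definition BB s x := s*(1-x) + x*(1-2*x).
Definition Nn s x w := w^2*(1+s-x) - (1-2*x)*s*x.
Definition Dn s x w := s*((1-2*x)^2 + w^2).

Section Alg.
Variables (s x w C S : R).
Hypothesis hs : 0 < s.
Let E1 := -w*w + s*x + s*(1-2*x)*C - s*w*S.
Let E2 := (s+x)*w - s*w*C - s*(1-2*x)*S.

Lemma L_mod : E1 = 0 -> E2 = 0 -> C^2 + S^2 = 1 -> Mrel s x w = 0.
Proof.
  unfold E1, E2, Mrel, kk. intros h1 h2 h3.
  assert (a1 : w*w - s*x = s*(1-2*x)*C - s*w*S) by lra.
  assert (a2 : (s+x)*w = s*w*C + s*(1-2*x)*S) by lra.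
  assert (key : (w*w - s*x)^2 + ((s+x)*w)^2 = ((s*(1-2*x))^2 + (s*w)^2) * (C^2+S^2)).
  { rewrite a1, a2. ring. }
  rewrite h3 in key. 
  replace (w ^ 4 + x ^ 2 * w ^ 2 - s ^ 2 * ((1 - x) * (1 - 3 * x))) with
    ((w*w - s*x)^2 + ((s+x)*w)^2 - ((s*(1-2*x))^2 + (s*w)^2) * 1) by ring.
  lra.
Qed.

Lemma L_C : E1 = 0 -> E2 = 0 -> s * (C * Dn s x w - Nn s x w) = 0.
Proof.
  intros h1 h2.
  transitivity (s*(1-2*x) * E1 - s*w*E2). unfold E1, E2, Dn, Nn; ring.
  rewrite h1, h2. ring.
Qed.

Lemma L_S : E1 = 0 -> E2 = 0 -> S * (s * Dn s x w) = s*w*(BB s x - w^2).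
Proof.
  intros h1 h2.
  apply Rminus_diag_uniq.
  transitivity (-s*w*E1 - s*(1-2*x)*E2). unfold E1, E2, Dn, BB; ring.
  rewrite h1, h2. ring.
Qed.

Lemma L_B : 0 < x <= 1/3 -> Mrel s x w = 0 -> w^2 < BB s x.
Proof.
  unfold Mrel, BB, kk. intros hx hm.
  assert (0 <= x*(1-2*x)) by (apply Rmult_le_pos; lra).
  assert (hB : s*(1-x) <= s*(1-x) + x*(1-2*x)) by lra.
  assert (hB2 : (s*(1-x))^2 > s^2*((1-x)*(1-3*x))).
  { assert (0 < s^2*(1-x)*(2*x)) by (repeat apply Rmult_lt_0_compat; try nra; lra).
    replace ((s*(1-x))^2) with (s^2*((1-x)*(1-3*x)) + s^2*(1-x)*(2*x)) by ring. lra. }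
  destruct (Rlt_or_le (w^2) (s*(1-x) + x*(1-2*x))) as [h|h]; [exact h|].
  exfalso.
  assert (h0 : 0 <= s*(1-x)) by nra.
  assert ((w^2)^2 >= (s*(1-x))^2) by nra.
  assert (x^2*w^2 >= 0) by nra.
  replace (w^4) with ((w^2)^2) in hm by ring. nra.
Qed.

End Alg.

Section X.
Variables (s Y : R).
Hypothesis hs : 0 < s.
Hypothesis hY : Y > 3 * s.

Lemma x_pos t : 0 < x_plus s Y t.
Proof. unfold x_plus. apply Rmult_lt_0_compat. apply Rdiv_lt_0_compat; lra. apply exp_pos. Qed.

Lemma exp_tau_star : exp (s * tau_star s Y) = Y / (3*s).
Proof.
  unfold tau_star. replace (s * (/ s * ln (Y / (3 * s)))) with (ln (Y / (3*s))) by (field; lra).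
  apply exp_ln. apply Rdiv_lt_0_compat; lra.
Qed.

Lemma x_le t : t <= tau_star s Y -> x_plus s Y t <= 1/3.
Proof.
  intros h. unfold x_plus.
  assert (exp (s*t) <= Y/(3*s)).
  { rewrite <- exp_tau_star. destruct (Req_dec t (tau_star s Y)) as [->|]. lra.
    left. apply exp_increasing. nra. }
  apply Rle_trans with (s / Y * (Y/(3*s))). apply Rmult_le_compat_l; [|lra].
  left; apply Rdiv_lt_0_compat; lra. right; field; lra.
Qed.

Lemma x_lt t : t < tau_star s Y -> x_plus s Y t < 1/3.
Proof.
  intros h. unfold x_plus.
  assert (exp (s*t) < Y/(3*s)).
  { rewrite <- exp_tau_star. apply exp_increasing. nra. }
  apply Rlt_le_trans with (s / Y * (Y/(3*s))). apply Rmult_lt_compat_l; [|lra].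
  apply Rdiv_lt_0_compat; lra. right; field; lra.
Qed.

Lemma x_eq_star : x_plus s Y (tau_star s Y) = 1/3.
Proof. unfold x_plus. rewrite exp_tau_star. field; lra. Qed.

End X.

Lemma omega_plus_eq s Y t :
  let x := x_plus s Y t in
  omega_plus s Y t = sqrt (/2 * (- x^2 + sqrt (x^4 + 4 * s^2 * kk x))).
Proof.
  unfold omega_plus, kk. cbv zeta.
  replace (4 * s ^ 2 * ((1 - x_plus s Y t) * (1 - 3 * x_plus s Y t))) with
    (s ^ 2 * (12 * x_plus s Y t ^ 2 - 16 * x_plus s Y t + 4)) by ring.
  reflexivity.
Qed.

Lemma omega_char s x w : 0 < s -> 0 < x <= 1/3 -> 0 < w -> Mrel s x w = 0 ->
  sqrt (/2 * (- x^2 + sqrt (x^4 + 4 * s^2 * kk x))) = w.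
Proof.
  unfold Mrel. intros hs hx hw hm.
  replace (x^4 + 4 * s^2 * kk x) with ((2*w^2 + x^2)^2).
  2:{ assert (e: s^2 * kk x = w^4 + x^2*w^2) by lra.
        replace (4 * s^2 * kk x) with (4*(s^2*kk x)) by ring. rewrite e. ring. }
  rewrite sqrt_pow2 by nra.
  replace (/ 2 * (- x ^ 2 + (2 * w ^ 2 + x ^ 2))) with (w^2) by field.
  apply sqrt_pow2. lra.
Qed.

Lemma omega_props s x : 0 < s -> 0 < x < 1/3 ->
  let w := sqrt (/2 * (- x^2 + sqrt (x^4 + 4 * s^2 * kk x))) in
  0 < w /\ Mrel s x w = 0.
Proof.
  intros hs hx w.
  assert (hk : 0 < kk x) by (unfold kk; nra).
  assert (hD : x^4 < x^4 + 4 * s^2 * kk x) by (assert (0 < s^2) by nra; nra).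
  set (R := sqrt (x^4 + 4 * s^2 * kk x)) in *.
  assert (hR : x^2 < R).
  { unfold R. rewrite <- (sqrt_pow2 (x^2)) by nra. apply sqrt_lt_1_alt. split. nra.
    replace ((x^2)^2) with (x^4) by ring. lra. }
  assert (hR2 : R^2 = x^4 + 4 * s^2 * kk x) by (unfold R; rewrite pow2_sqrt; nra).
  assert (hin : 0 < / 2 * (- x ^ 2 + R)) by lra.
  split. unfold w. apply sqrt_lt_R0. exact hin.
  assert (hw2 : w^2 = / 2 * (- x ^ 2 + R)) by (unfold w; apply pow2_sqrt; lra).
  unfold Mrel. replace (w^4) with ((w^2)^2) by ring. rewrite hw2.
  assert (e : s^2 * kk x = (R^2 - x^4)/4) by (rewrite hR2; field).
  rewrite e. field.
Qed.

Lemma cos_periodZ y m : cos (y + 2 * IZR m * PI) = cos y.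
Proof.
  destruct (Z_le_gt_dec 0 m) as [h|h].
  - rewrite <- (Z2Nat.id m h), <- INR_IZR_INZ. apply cos_period.
  - assert (h' : (0 <= - m)%Z) by lia.
    rewrite <- (cos_period (y + 2 * IZR m * PI) (Z.to_nat (-m))).
    rewrite INR_IZR_INZ, Z2Nat.id by exact h'. rewrite opp_IZR. f_equal. ring.
Qed.

Lemma sin_periodZ y m : sin (y + 2 * IZR m * PI) = sin y.
Proof.
  destruct (Z_le_gt_dec 0 m) as [h|h].
  - rewrite <- (Z2Nat.id m h), <- INR_IZR_INZ. apply sin_period.
  - assert (h' : (0 <= - m)%Z) by lia.
    rewrite <- (sin_period (y + 2 * IZR m * PI) (Z.to_nat (-m))).
    rewrite INR_IZR_INZ, Z2Nat.id by exact h'. rewrite opp_IZR. f_equal. ring.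
Qed.

Lemma angle_eq a th : cos a = cos th -> sin a = sin th ->
  exists m : Z, a = th + 2 * IZR m * PI.
Proof.
  intros hc hs.
  assert (h0 : sin (a - th) = 0) by (rewrite sin_minus, hc, hs; ring).
  assert (h1 : cos (a - th) = 1) by (rewrite cos_minus, hc, hs; rewrite <- hc, <- hs; pose proof (sin2_cos2 a); unfold Rsqr in *; lra).
  destruct (sin_eq_0_0 _ h0) as [j hj].
  destruct (Z.Even_or_Odd j) as [[m hm]|[m hm]]; subst j.
  - exists m. rewrite mult_IZR in hj. lra.
  - exfalso. rewrite hj, plus_IZR, mult_IZR in h1.
    replace ((2 * IZR m + 1) * PI) with (PI + 2 * IZR m * PI) in h1 by ring.
    rewrite cos_periodZ, cos_PI in h1. lra.
Qed.

Lemma F1_0 s Y w t : F1 s Y 0 w t =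
  -w*w + s*x_plus s Y t + s*(1-2*x_plus s Y t)*cos (w*t) - s*w*sin (w*t).
Proof. unfold F1. replace (-(0*t)) with 0 by ring. rewrite exp_0. ring. Qed.

Lemma F2_0 s Y w t : F2 s Y 0 w t =
  (s+x_plus s Y t)*w - s*w*cos (w*t) - s*(1-2*x_plus s Y t)*sin (w*t).
Proof. unfold F2. replace (-(0*t)) with 0 by ring. rewrite exp_0. ring. Qed.

Lemma F_0_neg s Y w t : F1 s Y 0 (-w) t = F1 s Y 0 w t /\ F2 s Y 0 (-w) t = - F2 s Y 0 w t.
Proof.
  rewrite !F1_0, !F2_0. replace (-w*t) with (-(w*t)) by ring.
  rewrite cos_neg, sin_neg. split; ring.
Qed.

Lemma h2_eq s Y w t : h2 s Y w t = Nn s (x_plus s Y t) w / Dn s (x_plus s Y t) w.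
Proof. reflexivity. Qed.

Lemma Dn_pos s x w : 0 < s -> 0 < w -> 0 < Dn s x w.
Proof. intros. unfold Dn. assert (0 < w^2) by (apply pow_lt; lra). assert (0 <= (1-2*x)^2) by apply pow2_ge_0. apply Rmult_lt_0_compat; lra. Qed.

Lemma backward s Y n t : 0 < s -> Y > 3 * s -> is_tau_n s Y n t ->
  let x := x_plus s Y t in let w := omega_plus s Y t in
  0 < w /\ Mrel s x w = 0 /\ F1 s Y 0 w t = 0 /\ F2 s Y 0 w t = 0 /\
  0 < sin (w*t) /\ cos (w*t) = h2 s Y w t /\ -1 < h2 s Y w t < 1 /\
  sqrt (1 - (h2 s Y w t)^2) = sin (w*t).
Proof.
  intros hs hY [[ht0 ht1] hth] x w.
  assert (hx : 0 < x < 1/3) by (split; [apply x_pos|apply x_lt]; lra).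
  assert (hw : w = sqrt (/2 * (- x^2 + sqrt (x^4 + 4 * s^2 * kk x)))) by apply omega_plus_eq.
  destruct (omega_props s x hs hx) as [hw0 hM]. rewrite <- hw in hw0, hM.
  assert (hD := Dn_pos s x w hs hw0).
  set (C0 := h2 s Y w t).
  set (S0 := s*w*(BB s x - w^2) / (s * Dn s x w)).
  assert (hC0 : C0 * Dn s x w = Nn s x w) by (unfold C0; rewrite h2_eq; fold x; field; lra).
  assert (hS0 : S0 * (s * Dn s x w) = s*w*(BB s x - w^2)) by (unfold S0; field; nra).
  assert (hB := L_B s x w hs ltac:(lra) hM).
  assert (hSpos : 0 < S0).
  { unfold S0. apply Rdiv_lt_0_compat. apply Rmult_lt_0_compat; nra. nra. }
  assert (hid : (s*Nn s x w)^2 + (s*w*(BB s x - w^2))^2 = (s*Dn s x w) * (s*Dn s x w + Mrel s x w)).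
  { unfold Nn, BB, Dn, Mrel, kk. ring. }
  rewrite hM, Rplus_0_r in hid.
  assert (hCS : C0^2 + S0^2 = 1).
  { rewrite <- hC0, <- hS0 in hid.
    assert (0 < s * Dn s x w) by nra.
    apply Rmult_eq_reg_r with ((s * Dn s x w)^2). 2: nra.
    replace ((s * (C0 * Dn s x w)) ^ 2 + (S0 * (s * Dn s x w)) ^ 2) with ((C0^2+S0^2)*(s * Dn s x w)^2) in hid by ring.
    lra. }
  assert (hCb : -1 < C0 < 1) by (split; nra).
  assert (hsq : sqrt (1 - C0^2) = S0) by (rewrite <- (sqrt_pow2 S0) by lra; f_equal; lra).
  assert (hcos : cos (theta s Y t) = C0) by (unfold theta; apply cos_acos; lra).
  assert (hsin : sin (theta s Y t) = S0).
  { unfold theta. rewrite sin_acos by (fold w; fold C0; lra). fold w. fold C0. rewrite <- hsq. f_equal. unfold Rsqr. ring. }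
  assert (ewt : w * t = theta s Y t + 2 * INR n * PI) by (rewrite <- hth; unfold w; ring).
  assert (hc : cos (w*t) = C0) by (rewrite ewt, cos_period; exact hcos).
  assert (hsn : sin (w*t) = S0) by (rewrite ewt, sin_period; exact hsin).
  assert (E1z : F1 s Y 0 w t = 0).
  { rewrite F1_0. fold x. rewrite hc, hsn.
    apply Rmult_eq_reg_r with (s * Dn s x w). 2: nra.
    rewrite Rmult_0_l.
    transitivity (s*(1-2*x)*s*(C0 * Dn s x w - Nn s x w) - s*w*(S0 * (s * Dn s x w) - s*w*(BB s x - w^2))).
    unfold Nn, Dn, BB; ring. rewrite hC0, hS0. ring. }
  assert (E2z : F2 s Y 0 w t = 0).
  { rewrite F2_0. fold x. rewrite hc, hsn.
    apply Rmult_eq_reg_r with (s * Dn s x w). 2: nra.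
    rewrite Rmult_0_l.
    transitivity (- s*w*s*(C0 * Dn s x w - Nn s x w) - s*(1-2*x)*(S0 * (s * Dn s x w) - s*w*(BB s x - w^2))).
    unfold Nn, Dn, BB; ring. rewrite hC0, hS0. ring. }
  split; [lra|]. split; [exact hM|]. split; [exact E1z|]. split; [exact E2z|].
  split; [lra|]. split; [exact hc|]. split; [exact hCb|]. fold C0. rewrite hsn, hsq. reflexivity.
Qed.

Lemma mod_from_roots s Y w t : 0 < s ->
  F1 s Y 0 w t = 0 -> F2 s Y 0 w t = 0 -> Mrel s (x_plus s Y t) w = 0.
Proof.
  intros hs h1 h2. rewrite F1_0 in h1. rewrite F2_0 in h2.
  apply (L_mod s (x_plus s Y t) w (cos (w*t)) (sin (w*t))); try assumption.
  pose proof (sin2_cos2 (w*t)). unfold Rsqr in *. lra.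
Qed.

Lemma forward s Y t w : 0 < s -> Y > 3 * s -> 0 <= t <= tau_star s Y -> 0 < w ->
  F1 s Y 0 w t = 0 -> F2 s Y 0 w t = 0 -> exists n, is_tau_n s Y n t.
Proof.
  intros hs hY ht hw e1 e2.
  set (x := x_plus s Y t).
  assert (hM := mod_from_roots s Y w t hs e1 e2). fold x in hM.
  assert (hx0 : 0 < x) by (apply x_pos; lra).
  assert (hx1 : x <= 1/3) by (apply x_le; lra).
  assert (ht1 : t < tau_star s Y).
  { destruct (Req_dec t (tau_star s Y)) as [e|]; [|lra]. exfalso.
    assert (x = 1/3) by (unfold x; rewrite e; apply x_eq_star; lra).
    unfold Mrel, kk in hM. rewrite H in hM.
    assert (0 < w^2) by (apply pow_lt; lra).
    replace (w^4) with ((w^2)^2) in hM by ring. nra. }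
  assert (ht0 : 0 < t).
  { destruct (Req_dec t 0) as [e|]; [|lra]. exfalso.
    rewrite F2_0 in e2. replace (w*t) with 0 in e2 by (rewrite e; ring). rewrite cos_0, sin_0 in e2.
    fold x in e2. nra. }
  assert (hwe : omega_plus s Y t = w).
  { rewrite omega_plus_eq. fold x. apply omega_char; auto; lra. }
  rewrite F1_0 in e1. rewrite F2_0 in e2. fold x in e1, e2.
  assert (hC := L_C s x w (cos (w*t)) (sin (w*t)) e1 e2).
  assert (hS := L_S s x w (cos (w*t)) (sin (w*t)) e1 e2).
  assert (hB := L_B s x w hs ltac:(lra) hM).
  assert (hD := Dn_pos s x w hs hw).
  assert (hSpos : 0 < sin (w*t)).
  { assert (0 < s*w*(BB s x - w^2)) by (apply Rmult_lt_0_compat; [apply Rmult_lt_0_compat|]; lra).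
    assert (0 < s * Dn s x w) by (apply Rmult_lt_0_compat; lra).
    destruct (Rlt_or_le 0 (sin (w*t))) as [|hn]; [assumption|].
    assert (sin (w*t) * (s * Dn s x w) <= 0) by (apply Rmult_le_0_r; lra). lra. }
  assert (hCe : cos (w*t) = h2 s Y w t).
  { rewrite h2_eq. fold x. apply Rmult_eq_reg_r with (Dn s x w); [|lra].
    field_simplify; [|lra]. nra. }
  set (th := theta s Y t).
  assert (hCb : -1 <= h2 s Y w t <= 1) by (rewrite <- hCe; apply COS_bound).
  assert (hcos : cos th = cos (w*t)) by (unfold th, theta; rewrite hwe, cos_acos; lra).
  assert (hsin : sin th = sin (w*t)).
  { unfold th, theta. rewrite hwe, sin_acos by lra. rewrite <- hCe.
    rewrite <- (sqrt_pow2 (sin (w*t))) by lra. f_equal.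
    pose proof (sin2_cos2 (w*t)). unfold Rsqr in *. lra. }
  destruct (angle_eq (w*t) th) as [m hm]; [lra|lra|].
  assert (hth : th <= PI) by (unfold th, theta; apply acos_bound).
  assert (hm0 : (0 <= m)%Z).
  { destruct (Z_le_gt_dec 0 m) as [|hneg]; [assumption|exfalso].
    assert (IZR m <= -1) by (apply IZR_le; lia).
    assert (0 < w*t) by nra. pose proof PI_RGT_0. nra. }
  exists (Z.to_nat m). split; [lra|].
  rewrite INR_IZR_INZ, Z2Nat.id by exact hm0. rewrite hwe. fold th. lra.
Qed.

Lemma deriv_x s Y t : is_derive (x_plus s Y) t (s * x_plus s Y t).
Proof. unfold x_plus. auto_derive. auto. ring. Qed.

Ltac sideg := repeat (match goal with |- _ /\ _ => split | |- True => exact I | |- ex_derive _ _ => assumption | |- ex_derive _ _ => eexists; eassumption end).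

Definition gfun s Y t := x_plus s Y t ^ 4 + 4 * s^2 * kk (x_plus s Y t).
Definition innerf s Y t := / 2 * (- x_plus s Y t ^ 2 + sqrt (gfun s Y t)).

Definition wdf s x w := -(2*x*w^2 + s^2*(4-6*x))*(s*x)/(4*w^3+2*x^2*w).

Lemma deriv_eq_R (f : R -> R) z a b : is_derive f z a -> a = b -> is_derive f z b.
Proof. intros H e. rewrite <- e. exact H. Qed.

Lemma deriv_omega s Y t : 0 < s -> 0 < x_plus s Y t < 1/3 ->
  is_derive (omega_plus s Y) t (wdf s (x_plus s Y t) (omega_plus s Y t)).
Proof.
  intros hs hx.
  set (x := x_plus s Y t) in *.
  assert (hdx := deriv_x s Y t). fold x in hdx.
  assert (hg : is_derive (gfun s Y) t ((4*x^3 + 4*s^2*(6*x-4))*(s*x))).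
  { unfold gfun, kk. auto_derive.
    - sideg.
    - change (fun x0 : R => x_plus s Y x0) with (x_plus s Y).
      rewrite (is_derive_unique _ _ _ hdx). fold x. ring. }
  assert (hk : 0 < kk x). { unfold kk. apply Rmult_lt_0_compat; lra. }
  assert (hgp : 0 < gfun s Y t).
  { unfold gfun. fold x. assert (0 < x^4) by (apply pow_lt; lra). assert (0 < s^2) by nra. nra. }
  assert (hR := is_derive_sqrt _ _ _ hg hgp).
  destruct (omega_props s x hs hx) as [hw0 hM].
  set (w := sqrt (/ 2 * (- x ^ 2 + sqrt (x ^ 4 + 4 * s ^ 2 * kk x)))) in *.
  assert (hwe : omega_plus s Y t = w) by (rewrite omega_plus_eq; reflexivity).
  assert (hRe : sqrt (gfun s Y t) = 2*w^2 + x^2).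
  { unfold gfun. fold x.
    assert (hw2 : w^2 = / 2 * (- x ^ 2 + sqrt (x ^ 4 + 4 * s ^ 2 * kk x))) by (unfold w; apply pow2_sqrt; 
      destruct (Rle_dec 0 (/ 2 * (- x ^ 2 + sqrt (x ^ 4 + 4 * s ^ 2 * kk x)))); [auto| exfalso; 
      assert (0 < w) by auto; unfold w in *; rewrite sqrt_neg_0 in *; lra]).
    lra. }
  assert (hin : is_derive (innerf s Y) t (/2 * (-(2*x*(s*x)) + (4*x^3 + 4*s^2*(6*x-4))*(s*x) / (2 * sqrt (gfun s Y t))))).
  { unfold innerf. auto_derive.
    - sideg. exact hgp.
    - change (fun x0 : R => x_plus s Y x0) with (x_plus s Y).
      change (fun x0 : R => gfun s Y x0) with (gfun s Y).
      rewrite (is_derive_unique _ _ _ hdx). rewrite (is_derive_unique _ _ _ hg). fold x. rewrite hRe.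
      assert (0 < w^2) by (apply pow_lt; lra). assert (0 <= x^2) by apply pow2_ge_0. field. lra. }
  assert (hinp : 0 < innerf s Y t).
  { unfold innerf. fold x. rewrite hRe. assert (0 < w^2) by (apply pow_lt; lra). lra. }
  assert (ho := is_derive_sqrt _ _ _ hin hinp).
  assert (hinw : sqrt (innerf s Y t) = w).
  { rewrite <- hwe, omega_plus_eq. unfold innerf, gfun. reflexivity. }
  rewrite hinw, hRe in ho. rewrite hwe.
  apply (is_derive_ext (fun u => sqrt (innerf s Y u))).
  { intros u. rewrite omega_plus_eq. reflexivity. }
  refine (deriv_eq_R _ _ _ _ ho _).
  unfold wdf. assert (0 < w^2) by (apply pow_lt; lra). assert (0 <= x^2) by apply pow2_ge_0. match goal with |- ?a = ?b => change (@eq R a b) end. field. repeat split; nra.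
Qed.

Lemma is_derive_acos y : -1 < y < 1 -> is_derive acos y (-1 / sqrt (1 - y^2)).
Proof.
  intros h. apply is_derive_Reals.
  apply derive_pt_eq_1 with (derivable_pt_acos y h).
  rewrite derive_pt_acos. unfold Rsqr. f_equal. f_equal. ring.
Qed.

Definition Nnd s x w wd := 2*w*wd*(1+s-x) - w^2*(s*x) + 2*(s*x)*s*x - (1-2*x)*s*(s*x).
Definition Dnd s x w wd := s*(2*(1-2*x)*(-2*(s*x)) + 2*w*wd).
Definition hdf s x w wd := (Nnd s x w wd * Dn s x w - Nn s x w * Dnd s x w wd) / (Dn s x w)^2.

Lemma deriv_h2 s Y t wd : 0 < s -> 0 < omega_plus s Y t ->
  is_derive (omega_plus s Y) t wd ->
  is_derive (fun u => h2 s Y (omega_plus s Y u) u) t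
     (hdf s (x_plus s Y t) (omega_plus s Y t) wd).
Proof.
  intros hs hw hd.
  assert (hdx := deriv_x s Y t).
  assert (hD : 0 < Dn s (x_plus s Y t) (omega_plus s Y t)).
  { unfold Dn. assert (0 < omega_plus s Y t ^2) by (apply pow_lt; lra).
    assert (0 <= (1 - 2 * x_plus s Y t)^2) by apply pow2_ge_0. apply Rmult_lt_0_compat; lra. }
  unfold h2. auto_derive.
  - sideg. unfold Dn in hD. nra.
  - change (fun x0 : R => x_plus s Y x0) with (x_plus s Y).
    change (fun x0 : R => omega_plus s Y x0) with (omega_plus s Y).
    rewrite (is_derive_unique _ _ _ hdx), (is_derive_unique _ _ _ hd).
    unfold hdf, Nnd, Dnd, Nn, Dn in *. field. nra.
Qed.

Section Core.
Variables (s x xd w tau C S b : R).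
Definition Pr := s*x - w^2.
Definition Pi := (s+x)*w.
Definition Qr := s*(1-2*x).
Definition Qi := -s*w.
Definition Prd := s*xd - 2*w*b.
Definition Pid := xd*w + (s+x)*b.
Definition Qrd := -2*s*xd.
Definition Qid := -s*b.
Definition phi := b*tau + w.
Definition cE1 := Pr + Qr*C + Qi*S.
Definition cE2 := Pi + Qi*C - Qr*S.
Definition cG1 := Prd + Qrd*C + Qid*S + phi*(Qi*C - Qr*S).
Definition cG2 := Pid + Qid*C - Qrd*S - phi*(Qr*C + Qi*S).
Definition Ar := Qr*C + Qi*S.
Definition Ai := Qi*C - Qr*S.
Definition Brd := Qrd*C + Qid*S + phi*Ai.
Definition Bid := Qid*C - Qrd*S - phi*Ar.

Lemma core_id1 : Pr*Prd + Pi*Pid - Qr*Qrd - Qi*Qid =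
  cE1*cG1 - cE1*Brd - Ar*cG1 + cE2*cG2 - cE2*Bid - Ai*cG2 + (C^2+S^2-1)*(Qr*Qrd + Qi*Qid).
Proof. unfold Brd, Bid, cE1, cE2, cG1, cG2, Ar, Ai, Pr, Pi, Qr, Qi, Prd, Pid, Qrd, Qid, phi. ring. Qed.

Lemma core_id2 : 2*(Pr*Prd + Pi*Pid - Qr*Qrd - Qi*Qid) =
  (4*w^3 + 2*x^2*w)*b + (2*x*w^2 + s^2*(4-6*x))*xd.
Proof. unfold Pr, Pi, Qr, Qi, Prd, Pid, Qrd, Qid. ring. Qed.

Definition K := Pr*Qr + Pi*Qi.
Definition Kd := Prd*Qr + Pr*Qrd + Pid*Qi + Pi*Qid.
Definition Dq := Qr^2 + Qi^2.
Definition Dqd := 2*(Qr*Qrd + Qi*Qid).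

Lemma core_id3 : S*phi*Dq^2 - Kd*Dq + K*Dqd =
  -(cG1*Qr + cE1*Qrd + cG2*Qi + cE2*Qid)*Dq + (cE1*Qr + cE2*Qi)*Dqd.
Proof. unfold K, Kd, Dq, Dqd, cE1, cE2, cG1, cG2. unfold Pr, Pi, Qr, Qi, Prd, Pid, Qrd, Qid, phi. ring. Qed.
End Core.

Lemma core_b s x xd w tau C S b wd : 0 < w -> 0 < x ->
  cE1 s x w C S = 0 -> cE2 s x w C S = 0 ->
  cG1 s x xd w tau C S b = 0 -> cG2 s x xd w tau C S b = 0 -> C^2 + S^2 = 1 ->
  (4*w^3 + 2*x^2*w)*wd + (2*x*w^2 + s^2*(4-6*x))*xd = 0 -> b = wd.
Proof.
  intros hw hx h1 h2 h3 h4 h5 h6.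
  assert (e := core_id1 s x xd w tau C S b). rewrite h1, h2, h3, h4, h5 in e.
  assert (e2 := core_id2 s x xd w b).
  assert (hM : 0 < 4*w^3 + 2*x^2*w) by (assert (0 < w^3) by (apply pow_lt; lra); assert (0 <= x^2*w) by (apply Rmult_le_pos; [apply pow2_ge_0|lra]); lra).
  assert (e3 : (4*w^3 + 2*x^2*w)*(b - wd) = 0) by nra.
  apply Rmult_integral in e3. destruct e3; lra.
Qed.

Lemma core_final s x xd w tau C S b :
  cE1 s x w C S = 0 -> cE2 s x w C S = 0 ->
  cG1 s x xd w tau C S b = 0 -> cG2 s x xd w tau C S b = 0 ->
  S*phi w tau b*(Dq s x w)^2 - Kd s x xd w b * Dq s x w + K s x w * Dqd s x xd w b = 0.
Proof.
  intros h1 h2 h3 h4. rewrite (core_id3 s x xd w tau C S b). rewrite h1, h2, h3, h4. ring.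
Qed.

Lemma deriv_theta s Y t wd : 0 < s -> 0 < omega_plus s Y t ->
  is_derive (omega_plus s Y) t wd ->
  -1 < h2 s Y (omega_plus s Y t) t < 1 ->
  is_derive (theta s Y) t
     (hdf s (x_plus s Y t) (omega_plus s Y t) wd * (-1 / sqrt (1 - (h2 s Y (omega_plus s Y t) t)^2))).
Proof.
  intros hs hw hd hb.
  assert (H := deriv_h2 s Y t wd hs hw hd).
  assert (Ha := is_derive_acos _ hb).
  exact (is_derive_comp acos (fun u => h2 s Y (omega_plus s Y u) u) t _ _ Ha H).
Qed.

Lemma deriv_G1 s Y (mu nu : R -> R) t0 : 0 < Y ->
  ex_derive mu t0 -> ex_derive nu t0 -> mu t0 = 0 -> Derive mu t0 = 0 ->
  is_derive (fun t => F1 s Y (mu t) (nu t) t) t0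
    (cG1 s (x_plus s Y t0) (s * x_plus s Y t0) (nu t0) t0 (cos (nu t0 * t0)) (sin (nu t0 * t0)) (Derive nu t0)).
Proof.
  intros hY hm hn hm0 hdm.
  assert (hdx := deriv_x s Y t0).
  unfold F1. auto_derive.
  - sideg.
  - change (fun x0 : R => x_plus s Y x0) with (x_plus s Y).
    change (fun x0 : R => mu x0) with mu.
    change (fun x0 : R => nu x0) with nu.
    rewrite (is_derive_unique _ _ _ hdx), hdm, hm0.
    replace (- (0 * t0)) with 0 by ring. rewrite exp_0.
    unfold cG1, Prd, Qrd, Qid, phi, Qi, Qr. ring.
Qed.

Lemma deriv_G2 s Y (mu nu : R -> R) t0 : 0 < Y ->
  ex_derive mu t0 -> ex_derive nu t0 -> mu t0 = 0 -> Derive mu t0 = 0 ->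
  is_derive (fun t => F2 s Y (mu t) (nu t) t) t0
    (cG2 s (x_plus s Y t0) (s * x_plus s Y t0) (nu t0) t0 (cos (nu t0 * t0)) (sin (nu t0 * t0)) (Derive nu t0)).
Proof.
  intros hY hm hn hm0 hdm.
  assert (hdx := deriv_x s Y t0).
  unfold F2. auto_derive.
  - sideg.
  - change (fun x0 : R => x_plus s Y x0) with (x_plus s Y).
    change (fun x0 : R => mu x0) with mu.
    change (fun x0 : R => nu x0) with nu.
    rewrite (is_derive_unique _ _ _ hdx), hdm, hm0.
    replace (- (0 * t0)) with 0 by ring. rewrite exp_0.
    unfold cG2, Pid, Qrd, Qid, phi, Qi, Qr. ring.
Qed.

Lemma transv s Y n t0 : 0 < s -> Y > 3 * s -> is_tau_n s Y n t0 ->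
  Derive (fun t => t * omega_plus s Y t) t0 <> Derive (theta s Y) t0 ->
  forall lam : R -> C,
    (exists delta : R, 0 < delta /\
       forall t, Rabs (t - t0) < delta -> charfun s Y t (lam t) = 0%C) ->
    lam t0 = (0, omega_plus s Y t0) ->
    ex_derive (fun t => Re (lam t)) t0 ->
    ex_derive (fun t => Im (lam t)) t0 ->
    Derive (fun t => Re (lam t)) t0 <> 0.
Proof.
  intros hs hY ht Hneq lam [d [hd hroot]] hl hexR hexI hD. apply Hneq.
  pose proof (backward s Y n t0 hs hY ht) as HB. cbv zeta in HB.
  destruct HB as [hw [hM [e1 [e2 [hS [hC [hb hsq]]]]]]].
  assert (hx : 0 < x_plus s Y t0 < 1/3) by (destruct ht as [[? ?] _]; split; [apply x_pos|apply x_lt]; lra).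
  set (x := x_plus s Y t0) in *. set (w := omega_plus s Y t0) in *.
  set (mu := fun t => Re (lam t)) in *. set (nu := fun t => Im (lam t)) in *.
  assert (hmu0 : mu t0 = 0) by (unfold mu; rewrite hl; reflexivity).
  assert (hnu0 : nu t0 = w) by (unfold nu; rewrite hl; reflexivity).
  assert (hF : forall t, Rabs (t - t0) < d -> F1 s Y (mu t) (nu t) t = 0 /\ F2 s Y (mu t) (nu t) t = 0).
  { intros t Ht. specialize (hroot t Ht).
    assert (el : lam t = (mu t, nu t)) by (unfold mu, nu; destruct (lam t); reflexivity).
    rewrite el, charfun_comp in hroot by lra.
    split; [apply (f_equal fst) in hroot | apply (f_equal snd) in hroot]; simpl in hroot; exact hroot. }
  assert (hloc : forall (g : R -> R), (forall t, Rabs (t - t0) < d -> g t = 0) -> is_derive g t0 0).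
  { intros g hg. apply (is_derive_ext_loc (fun _ => 0)).
    - exists (mkposreal d hd). intros t Ht. symmetry. apply hg. exact Ht.
    - auto_derive; auto. }
  assert (G1a := is_derive_unique _ _ _ (deriv_G1 s Y mu nu t0 ltac:(lra) hexR hexI hmu0 hD)).
  assert (G1b := is_derive_unique _ _ _ (hloc _ (fun t h => proj1 (hF t h)))).
  assert (G2a := is_derive_unique _ _ _ (deriv_G2 s Y mu nu t0 ltac:(lra) hexR hexI hmu0 hD)).
  assert (G2b := is_derive_unique _ _ _ (hloc _ (fun t h => proj2 (hF t h)))).
  match type of G1a with _ = ?v => assert (G1 : v = 0) by (rewrite <- G1a; exact G1b) end.
  match type of G2a with _ = ?v => assert (G2 : v = 0) by (rewrite <- G2a; exact G2b) end.
  clear G1a G1b G2a G2b.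
  fold x in G1, G2. rewrite hnu0 in G1, G2.
  set (b := Derive nu t0) in *.
  set (Cc := cos (w * t0)) in *. set (Ss := sin (w * t0)) in *.
  assert (E1 : cE1 s x w Cc Ss = 0) by (rewrite F1_0 in e1; fold x w Cc Ss in e1; unfold cE1, Pr, Qr, Qi; lra).
  assert (E2 : cE2 s x w Cc Ss = 0) by (rewrite F2_0 in e2; fold x w Cc Ss in e2; unfold cE2, Pi, Qr, Qi; lra).
  assert (Tr : Cc^2 + Ss^2 = 1) by (unfold Cc, Ss; pose proof (sin2_cos2 (w*t0)); unfold Rsqr in *; lra).
  set (wd := wdf s x w).
  assert (hw3 : 0 < 4*w^3 + 2*x^2*w) by (assert (0 < w^3) by (apply pow_lt; lra); assert (0 <= x^2*w) by (apply Rmult_le_pos; [apply pow2_ge_0|lra]); lra).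
  assert (Wd : (4*w^3 + 2*x^2*w)*wd + (2*x*w^2 + s^2*(4-6*x))*(s*x) = 0) by (unfold wd, wdf; field; lra).
  assert (hbw := core_b s x (s*x) w t0 Cc Ss b wd hw ltac:(lra) E1 E2 G1 G2 Tr Wd).
  rewrite hbw in G1, G2.
  assert (Fin := core_final s x (s*x) w t0 Cc Ss wd E1 E2 G1 G2).
  assert (hdo := deriv_omega s Y t0 hs hx). fold x w wd in hdo.
  assert (hD1 : is_derive (fun t => t * omega_plus s Y t) t0 (w + t0 * wd)).
  { auto_derive. sideg. change (fun x0 : R => omega_plus s Y x0) with (omega_plus s Y).
    rewrite (is_derive_unique _ _ _ hdo). fold w. ring. }
  transitivity (w + t0 * wd). { apply is_derive_unique. exact hD1. }
  assert (hD2 := deriv_theta s Y t0 wd hs hw hdo hb). fold x w in hD2.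
  symmetry. transitivity (hdf s x w wd * (-1 / sqrt (1 - h2 s Y w t0 ^ 2))).
  { apply is_derive_unique. exact hD2. }
  rewrite hsq. fold Ss.
  assert (hDn : 0 < Dn s x w) by (apply Dn_pos; lra).
  assert (hh : hdf s x w wd = -(Kd s x (s*x) w wd * Dq s x w - K s x w * Dqd s x (s*x) w wd) / (Dq s x w)^2).
  { unfold hdf, Kd, Dq, K, Dqd, Nnd, Dnd, Nn, Dn, Prd, Pr, Pid, Pi, Qr, Qi, Qrd, Qid in *. field. nra. }
  rewrite hh.
  assert (hDq : 0 < Dq s x w) by (unfold Dq, Qr, Qi; unfold Dn in hDn; nra).
  unfold phi in Fin.
  replace (Kd s x (s * x) w wd * Dq s x w - K s x w * Dqd s x (s * x) w wd)
    with (Ss * (wd * t0 + w) * Dq s x w ^ 2) by lra.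
  field. split; lra.
Qed.

Lemma dchar_im s Y t w : 0 < Y -> snd (dchar s Y t (0,w)) =
  2*w + s*sin(w*t) + t*(s*w*cos(w*t) + s*(1-2*x_plus s Y t)*sin(w*t)).
Proof.
  intros hY. unfold dchar, Cexp, p_coef, q_coef, c_coef, x_plus. simpl.
  replace (- 0 * t - - w * 0) with 0 by ring.
  replace (- 0 * 0 + - w * t) with (-(w*t)) by ring.
  rewrite exp_0, cos_neg, sin_neg. field. lra.
Qed.

Lemma charfun_zero s Y t a b : 0 < Y -> charfun s Y t (a,b) = 0%C <-> (F1 s Y a b t = 0 /\ F2 s Y a b t = 0).
Proof.
  intros hY. rewrite charfun_comp by exact hY. split.
  - intros h. split; [apply (f_equal fst) in h|apply (f_equal snd) in h]; simpl in h; exact h.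
  - intros [h1 h2]. rewrite h1, h2. reflexivity.
Qed.

Lemma Mrel_uniq x u v : 0 <= u -> 0 <= v -> u^2 + x^2*u = v^2 + x^2*v -> u = v.
Proof.
  intros hu hv h.
  assert (e : (u - v) * (u + v + x^2) = 0) by (rewrite <- (Rminus_diag_eq _ _ h); ring).
  apply Rmult_integral in e. destruct e as [e|e]; [lra|].
  assert (0 <= x^2) by apply pow2_ge_0. lra.
Qed.

Lemma no_multiple s Y n t0 (k : Z) : 0 < s -> Y > 3 * s -> is_tau_n s Y n t0 ->
  k <> 1%Z -> k <> (-1)%Z -> charfun s Y t0 (0, IZR k * omega_plus s Y t0) <> 0%C.
Proof.
  intros hs hY ht hk1 hk2 hc.
  pose proof (backward s Y n t0 hs hY ht) as HB. cbv zeta in HB.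
  destruct HB as [hw [hM _]].
  assert (hx : 0 < x_plus s Y t0 < 1/3) by (destruct ht as [[? ?] _]; split; [apply x_pos|apply x_lt]; lra).
  apply charfun_zero in hc; [|lra]. destruct hc as [e1 e2].
  set (w := omega_plus s Y t0) in *. set (x := x_plus s Y t0) in *.
  destruct (Z.eq_dec k 0) as [->|hk0].
  - rewrite F1_0 in e1. rewrite Rmult_0_l, Rmult_0_l, cos_0, sin_0 in e1. fold x in e1. nra.
  - assert (hM2 := mod_from_roots s Y _ t0 hs e1 e2). fold x in hM2.
    unfold Mrel in hM, hM2.
    assert (hu : (IZR k * w)^2 = w^2).
    { apply (Mrel_uniq x); try apply pow2_ge_0.
      replace (((IZR k * w)^2)^2) with ((IZR k * w)^4) by ring.
      replace ((w^2)^2) with (w^4) by ring. lra. }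
    assert (hk : IZR k ^ 2 = 1).
    { assert (0 < w^2) by (apply pow_lt; lra).
      replace ((IZR k * w)^2) with (IZR k ^2 * w^2) in hu by ring. nra. }
    assert (hkz : (k * k = 1)%Z).
    { apply eq_IZR. rewrite mult_IZR. simpl in hk. lra. }
    nia.
Qed.

Theorem theorem3p4 (s Y : R) (hs : 0 < s) (hY : Y > 3 * s) :
  (forall tau : R, 0 <= tau <= tau_star s Y ->
     ((exists omega : R, 0 < omega /\
         charfun s Y tau (0, omega) = 0%C /\ charfun s Y tau (0, - omega) = 0%C)
      <-> (exists n : nat, is_tau_n s Y n tau)))
  /\
  (forall (n : nat) (tau0 : R), is_tau_n s Y n tau0 ->
     charfun s Y tau0 (0, omega_plus s Y tau0) = 0%C /\
     charfun s Y tau0 (0, - omega_plus s Y tau0) = 0%C /\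
     (exists d : C, is_derive (charfun s Y tau0) (0, omega_plus s Y tau0) d /\ d <> 0%C) /\
     (exists d : C, is_derive (charfun s Y tau0) (0, - omega_plus s Y tau0) d /\ d <> 0%C) /\
     (forall k : Z, k <> 1%Z -> k <> (-1)%Z ->
        charfun s Y tau0 (0, IZR k * omega_plus s Y tau0) <> 0%C) /\
     (Derive (fun t => t * omega_plus s Y t) tau0 <> Derive (theta s Y) tau0 ->
      forall lam : R -> C,
        (exists delta : R, 0 < delta /\
           forall t, Rabs (t - tau0) < delta -> charfun s Y t (lam t) = 0%C) ->
        lam tau0 = (0, omega_plus s Y tau0) ->
        ex_derive (fun t => Re (lam t)) tau0 ->
        ex_derive (fun t => Im (lam t)) tau0 ->
        Derive (fun t => Re (lam t)) tau0 <> 0)).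
Proof.
  assert (hY0 : 0 < Y) by lra.
  split.
  - intros tau htau. split.
    + intros [w [hw [h1 _]]]. apply charfun_zero in h1; [|lra]. destruct h1 as [e1 e2].
      exact (forward s Y tau w hs hY htau hw e1 e2).
    + intros [n hn]. pose proof (backward s Y n tau hs hY hn) as HB. cbv zeta in HB.
      destruct HB as [hw [_ [e1 [e2 _]]]].
      exists (omega_plus s Y tau). split; [exact hw|].
      destruct (F_0_neg s Y (omega_plus s Y tau) tau) as [n1 n2].
      split; apply charfun_zero; try lra; split; try rewrite n1; try rewrite n2; lra.
  - intros n tau0 hn.
    pose proof (backward s Y n tau0 hs hY hn) as HB. cbv zeta in HB.
    destruct HB as [hw [hM [e1 [e2 [hS _]]]]].
    destruct (F_0_neg s Y (omega_plus s Y tau0) tau0) as [n1 n2].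
    assert (ht0 : 0 < tau0) by (destruct hn as [[? ?] _]; lra).
    assert (hx : 0 < x_plus s Y tau0) by (apply x_pos; lra).
    assert (e2' := e2). rewrite F2_0 in e2'.
    set (w := omega_plus s Y tau0) in *. set (x := x_plus s Y tau0) in *.
    split; [apply charfun_zero; [lra|split; assumption]|].
    split; [apply charfun_zero; [lra|split; [rewrite n1|rewrite n2]; lra]|].
    split.
    { exists (dchar s Y tau0 (0, w)). split; [apply is_derive_charfun|].
      intros hd. apply (f_equal snd) in hd. rewrite dchar_im in hd by lra. simpl in hd.
      fold x in hd.
      assert (0 < tau0 * ((s+x)*w)) by (apply Rmult_lt_0_compat; nra).
      nra. }
    split.
    { exists (dchar s Y tau0 (0, - w)). split; [apply is_derive_charfun|].
      intros hd. apply (f_equal snd) in hd. rewrite dchar_im in hd by lra. simpl in hd.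
      fold x in hd. replace (- w * tau0) with (-(w*tau0)) in hd by ring.
      rewrite cos_neg, sin_neg in hd.
      assert (0 < tau0 * ((s+x)*w)) by (apply Rmult_lt_0_compat; nra).
      nra. }
    split.
    { intros k hk1 hk2. exact (no_multiple s Y n tau0 k hs hY hn hk1 hk2). }
    intros Hneq lam. exact (transv s Y n tau0 hs hY hn Hneq lam).
Qed.
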